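(* For every prime power $q$ and every $G\in\mathfrak{g}_3(\mathbb{F}_q)$, the nonlooped vertices of $G$ are pairwise adjacent (they form a clique).
   Context: For a symmetric $n\times n$ matrix $A$, the looped graph corresponding to $A$, $\Gamma(A)$, has vertex set $\{1,\dots,n\}$, an edge $ij$ ($i\neq j$) iff $a_{ij}\neq0$, and a loop at $i$ iff $a_{ii}\ne 0$. Definition of $\mathfrak{g}_k(\mathbb{F}_q)$: let $x_1,\dots,x_m$ be representatives of the classes of nonzero vectors of $\mathbb{F}_q^k$ under the relation $x\sim cx$ ($c\in\mathbb{F}_q$, $c\neq0$), and let $U=[x_1\ \cdots\ x_m]$; $\mathfrak{g}_k(\mathbb{F}_q)$ is the set of isomorphism classes of looped graphs $\Gamma(U^tBU)$ as $B$ ranges over the invertible symmetric $k\times k$ matrices over $\mathbb{F}_q$. *)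

(* Defs.v *)
From HB Require Import structures.
From mathcomp Require Import all_boot all_order all_algebra.
Set Implicit Arguments. Unset Strict Implicit. Unset Printing Implicit Defensive.
Import GRing.Theory.
Local Open Scope ring_scope.

(* A looped graph on vertex set 'I_n: an adjacency relation (on distinct
   vertices) and a loop predicate. *)
Record looped_graph := LoopedGraph {
  lg_n : nat;
  lg_adj : rel 'I_lg_n;
  lg_loop : pred 'I_lg_n }.

Definition Gamma (F : fieldType) (n : nat) (A : 'M[F]_n) : looped_graph :=
  @LoopedGraph n (fun i j => (i != j) && (A i j != 0)) (fun i => A i i != 0).

Definition lg_iso (G H : looped_graph) : Prop :=
  exists f : 'I_(lg_n G) -> 'I_(lg_n H),
    [/\ bijective f,
        forall i j, @lg_adj H (f i) (f j) = @lg_adj G i j &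
        forall i, @lg_loop H (f i) = @lg_loop G i].

(* The columns of U : 'M_(k,m) form a system of representatives of the
   nonzero vectors of F^k modulo nonzero scalars. *)
Definition proj_reps (F : fieldType) (k m : nat) (U : 'M[F]_(k, m)) : Prop :=
  [/\ forall i, col i U != 0,
      forall i j, i != j -> forall c : F, col i U != c *: col j U &
      forall x : 'cV[F]_k, x != 0 -> exists i, exists2 c : F, c != 0 & x = c *: col i U].

(* G belongs to g_k(F) (the set of isomorphism classes is represented by
   the predicate "isomorphic to some Gamma(U^t B U)"), for the given U. *)
Definition in_gk (F : fieldType) (k m : nat) (U : 'M[F]_(k, m)) (G : looped_graph) : Prop :=
  exists B : 'M[F]_k, [/\ B^T = B, B \in unitmx & lg_iso G (Gamma (U^T *m B *m U))].

(* Main.v *)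
Require Import Defs.
From HB Require Import structures.
From mathcomp Require Import all_boot all_order all_algebra.
Set Implicit Arguments. Unset Strict Implicit. Unset Printing Implicit Defensive.
Import GRing.Theory.
Local Open Scope ring_scope.

Lemma entry_form (F : fieldType) k m (U : 'M[F]_(k, m)) (B : 'M[F]_k) a b :
  (U^T *m B *m U) a b = ((col a U)^T *m B *m col b U) 0 0.
Proof.
rewrite !mxE; apply: eq_bigr => i _; rewrite !mxE; congr (_ * _).
by apply: eq_bigr => j _; rewrite !mxE.
Qed.

Lemma mx11_0 (F : fieldType) (A : 'M[F]_1) : A 0 0 = 0 -> A = 0.
Proof. by move=> h; apply/matrixP=> i j; rewrite !ord1 mxE h. Qed.

Lemma indep2 (F : fieldType) (x y : 'cV[F]_3) :
  x != 0 -> (forall c, y != c *: x) -> row_free (col_mx x^T y^T).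
Proof.
move=> x0 yx; apply: inj_row_free => v.
rewrite -[v]hsubmxK mul_row_col.
rewrite [lsubmx v]mx11_scalar [rsubmx v]mx11_scalar !mul_scalar_mx.
set c0 := lsubmx v 0 0; set c1 := rsubmx v 0 0 => h.
have h' : c0 *: x + c1 *: y = 0.
  by have := congr1 trmx h; rewrite linearD !linearZ /= !trmxK trmx0.
have c10 : c1 = 0.
  apply/eqP; apply/negPn/negP => c1n0; apply: (negP (yx (- (c0 / c1)))).
  apply/eqP.
  have : c1 *: y = - (c0 *: x) by apply/eqP; rewrite -addr_eq0 addrC h'.
  move/(congr1 (fun z => c1^-1 *: z)); rewrite scalerA mulVf // scale1r => ->.
  by rewrite scalerN scalerA mulrC scaleNr.
have c00 : c0 = 0.
  move: h'; rewrite c10 scale0r addr0 => /eqP; rewrite scaler_eq0.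
  by rewrite (negbTE x0) orbF => /eqP.
by rewrite c00 c10 !raddf0 row_mx0.
Qed.

Theorem mainTheorem16 (F : finFieldType) (m : nat) (U : 'M[F]_(3, m))
  (hU : proj_reps U) (G : looped_graph) (hG : in_gk U G) :
  forall u v : 'I_(lg_n G), u != v -> ~~ @lg_loop G u -> ~~ @lg_loop G v ->
    @lg_adj G u v.
Proof.
move=> u v uv lu lv.
case: hU => hU1 hU2 _.
case: hG => B [BT Bu [f [fbij fadj floop]]].
have finj := bij_inj fbij.
rewrite -fadj /=.
rewrite -floop /= negbK in lu; rewrite -floop /= negbK in lv.
have ab : f u != f v by apply: contra uv => /eqP /finj ->.
rewrite ab /=; apply/negP => /eqP hab.
set x := col (f u) U; set y := col (f v) U.
have hxx : x^T *m B *m x = 0 by apply: mx11_0; rewrite -entry_form; apply/eqP.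
have hyy : y^T *m B *m y = 0 by apply: mx11_0; rewrite -entry_form; apply/eqP.
have hxy : x^T *m B *m y = 0 by apply: mx11_0; rewrite -entry_form.
have hyx : y^T *m B *m x = 0.
  apply: (can_inj (@trmxK _ _ _)); by rewrite trmx0 !trmx_mul trmxK BT mulmxA hxy.
set X := col_mx x^T y^T.
have XBX : (X *m B) *m X^T = 0.
  rewrite /X tr_col_mx !trmxK mul_mx_row !mul_col_mx.
  by rewrite hxx hxy hyx hyy !col_mx0 row_mx0.
have := mulmx0_rank_max XBX.
have fr : row_free X.
  apply: indep2; first exact: hU1.
  by move=> c; apply: hU2; rewrite eq_sym.
rewrite mxrankMfree; last by rewrite row_free_unit.
by rewrite mxrank_tr (eqP fr).
Qed.
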